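(* If $\mathcal{X}$ is infinite, there is no consistent hypothesis test for condition $\mathrm{FS}$: for every sequence of (possibly randomized) decision functions $\hat t_n:\mathcal{X}^n\to\{0,1\}$ there exists a process $\mathbb{X}$ on $\mathcal{X}$ such that $\hat t_n(X_1,\dots,X_n)$ does not converge in probability to $\mathbb{1}_{\mathbb{X}\in\mathrm{FS}}$.
   Context: $\mathrm{FS}$ is the set of stochastic processes $\mathbb{X}=(X_t)_{t\ge1}$ on $\mathcal{X}$ that take only finitely many distinct values almost surely. A hypothesis test is a sequence of possibly random decision functions $\hat t_n$ applied to $(X_1,\dots,X_n)$; it is consistent for a class $\mathcal{C}$ of processes if for every process $\mathbb{X}$, $\hat t_n(X_1,\dots,X_n)\to\mathbb{1}_{\mathbb{X}\in\mathcal{C}}$ in probability. *)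

(* Defs.v *)
From HB Require Import structures.
From mathcomp Require Import all_boot all_order all_algebra.
From mathcomp Require Import all_classical all_reals all_analysis.
Set Implicit Arguments. Unset Strict Implicit. Unset Printing Implicit Defensive.
Import Order.TTheory GRing.Theory Num.Theory.
Local Open Scope classical_set_scope.
Local Open Scope ring_scope.

(* A process X = (X_t)_{t>=1} on Xs, defined on a probability space
   (Omega, P); indices are shifted: X t is X_{t+1}. *)

(* The sample (X_1, ..., X_n) as an n-tuple (n.-tuple carries the product
   sigma-algebra in mathcomp-analysis). *)
Definition sample {Omega Xs : Type} (X : nat -> Omega -> Xs) (n : nat)
  (w : Omega) : n.-tuple Xs := [tuple X (nat_of_ord i) w | i < n].

Definition FS {R : realType} {d dX : measure_display}
  {Omega : measurableType d} {Xs : measurableType dX}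
  (P : probability Omega R) (X : nat -> Omega -> Xs) : Prop :=
  {ae P, forall w, finite_set (range (fun t => X t w))}.

(* A (possibly randomized) test: external randomness u drawn from an
   independent probability space (U, Q), and for each n a jointly measurable
   decision function t n : U -> Xs^n -> bool. *)
Definition consistent_on {R : realType} {d dX dU : measure_display}
  {Omega : measurableType d} {Xs : measurableType dX} {U : measurableType dU}
  (Q : probability U R) (t : forall n : nat, U -> n.-tuple Xs -> bool)
  (P : probability Omega R) (X : nat -> Omega -> Xs) : Prop :=
  let c : bool := `[< FS P X >] in
  forall eps : R, 0 < eps ->
    ((fun n => (Q \x P)%E
        [set z : U * Omega | `| (t n z.1 (sample X n z.2))%:R - c%:R | >= eps])
      @ \oo --> 0%E).

(* Main.v *)
Require Import Defs.
From HB Require Import structures.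
From mathcomp Require Import all_boot all_order all_algebra.
From mathcomp Require Import all_classical all_reals all_analysis.
From mathcomp Require Import lra.
Import Order.TTheory GRing.Theory Num.Theory.
Local Open Scope classical_set_scope.
Local Open Scope ring_scope.

Section comb.
Context {T : Type} (a : nat -> T) (ch : (nat -> T) -> nat -> nat).
Hypothesis hch : forall x m, (m < ch x m)%N.

Fixpoint seqs (k : nat) : (nat -> T) * nat :=
  if k is k'.+1 then
    let p := seqs k' in let n := ch p.1 p.2 in
    (fun t => if (t < n)%N then p.1 t else a k, n)
  else (fun _ => a 0%N, 0%N).

Lemma seqs_lt k : ((seqs k).2 < (seqs k.+1).2)%N.
Proof. exact: hch. Qed.

Lemma seqs_ge k : (k <= (seqs k).2)%N.
Proof. elim: k => // k IH; exact: leq_ltn_trans IH (seqs_lt k). Qed.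

Lemma seqs_mono {i j} : (i <= j)%N -> ((seqs i).2 <= (seqs j).2)%N.
Proof.
elim: j => [|j IH]; first by rewrite leqn0 => /eqP->.
rewrite leq_eqVlt => /orP[/eqP->//|/IH h]; exact: leq_trans h (ltnW (seqs_lt j)).
Qed.

Lemma seqs_stable {i j t} : (i <= j)%N -> (t < (seqs i).2)%N ->
  (seqs j).1 t = (seqs i).1 t.
Proof.
move=> ij ti; elim: j ij => [|j IH]; first by rewrite leqn0 => /eqP->.
rewrite leq_eqVlt => /orP[/eqP->//|ij].
have ij' : (i <= j)%N by [].
rewrite /= -/(seqs j).
have -> : (t < ch (seqs j).1 (seqs j).2)%N.
  apply: (leq_trans ti); apply: (leq_trans (seqs_mono ij')).
  exact: ltnW (seqs_lt j).
exact: IH.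
Qed.

Definition ylim t := (seqs t.+1).1 t.

Lemma ylimE {k t} : (t < (seqs k).2)%N -> ylim t = (seqs k).1 t.
Proof.
move=> tk; rewrite /ylim; case: (leqP k t.+1) => h.
  exact: seqs_stable h tk.
symmetry; apply: seqs_stable; first exact: ltnW.
exact: leq_trans (seqs_ge t.+1).
Qed.

Lemma ylim_at k : ylim (seqs k).2 = a k.
Proof.
rewrite (ylimE (seqs_lt k)) /= -/(seqs k).
by have := seqs_lt k => /= ->; case: k => [|k]//=; rewrite ltnn.
Qed.

Lemma seqs_range k : range (seqs k).1 `<=` a @` [set i | (i <= k)%N].
Proof.
elim: k => [|k IH] y [t _ <-] /=; first by exists 0%N.
case: ifP => _; last by exists k.+1.
have [i ik <-] := IH _ (ex_intro2 _ _ t I erefl).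
by exists i => //=; rewrite /= in ik *; exact: leq_trans ik _.
Qed.

Lemma seqs_finite k : finite_set (range (seqs k).1).
Proof.
apply: sub_finite_set (seqs_range k) _; apply: finite_image.
apply: sub_finite_set (finite_II k.+1) => i /=; by rewrite ltnS.
Qed.

Lemma ylim_inf : injective a -> infinite_set (range ylim).
Proof.
move=> ainj fin; apply: infinite_nat.
have -> : [set: nat] = a @^-1` range ylim.
  by apply/seteqP; split => // k _; exists (seqs k).2 => //; exact: ylim_at.
by apply: finite_preimage fin => i j _ _; apply: ainj.
Qed.

Lemma ylim_tuple k n : (n <= (seqs k).2)%N ->
  [tuple ylim i | i < n] = [tuple (seqs k).1 i | i < n].
Proof.
move=> nk; apply: eq_mktuple => i; apply: ylimE.
exact: leq_trans (ltn_ord i) nk.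
Qed.

Lemma seqs_tuple k :
  [tuple (seqs k.+1).1 i | i < (seqs k.+1).2] = [tuple (seqs k).1 i | i < (seqs k.+1).2].
Proof. by apply: eq_mktuple => i /=; rewrite ltn_ord. Qed.
End comb.

Section meas.
Context (R : realType) (dX : measure_display) (Xs : measurableType dX)
  (dU : measure_display) (U : measurableType dU) (Q : probability U R)
  (t : forall n : nat, U -> n.-tuple Xs -> bool)
  (t_meas : forall n : nat,
      measurable_fun [set: U * n.-tuple Xs] (fun z => t n z.1 z.2)).

Lemma err_meas n s (c : bool) : measurable [set u | t n u s != c].
Proof.
have mf : measurable_fun setT (fun u => t n u s).
  exact: (measurableT_comp (t_meas n) (pair2_measurable s)).
rewrite -[X in measurable X]setTI.
by apply: (mf measurableT [set b | b != c]).
Qed.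

Lemma errE n s (c : bool) : (Q \x Q)%E [set z : U * U | (1/2:R) <= `|(t n z.1 s)%:R - c%:R| ]
   = Q [set u | t n u s != c].
Proof.
have -> : [set z : U * U | (1/2:R) <= `|(t n z.1 s)%:R - c%:R| ] =
   [set u | t n u s != c] `*` setT.
  apply/seteqP; split => z /=.
    case: (t n z.1 s); case: c => /=; rewrite ?subrr ?normr0 ?subr0 ?sub0r ?normrN ?normr1;
      move=> h; split => //; move: h; rewrite ?invr_ge0 ?ler0N1; lra.
  by case: (t n z.1 s); case: c => -[] //= _ _; rewrite ?subr0 ?sub0r ?normrN ?normr1; lra.
rewrite product_measure1E //; last exact: err_meas.
transitivity (Q [set u | t n u s != c] * 1)%E; last exact: mule1.
congr (_ * _)%E; exact: probability_setT.
Qed.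

Lemma errC n s : (Q [set u | t n u s != true] + Q [set u | t n u s != false] = 1)%E.
Proof.
rewrite -measureU; try exact: err_meas.
  rewrite -(probability_setT Q); congr (Q _); apply/seteqP; split => u //= _.
  by case: (t n u s); [right|left].
by apply/seteqP; split => u //= []; case: (t n u s).
Qed.

Lemma fs_const (x : nat -> Xs) : FS Q (fun i (_ : U) => x i) <-> finite_set (range x).
Proof.
split; last by move=> h; apply: aeW.
move=> [A [mA A0 sA]]; apply: contrapT => nf.
have : A = setT by apply/seteqP; split => // w _; apply: sA.
move=> AT; move: A0; rewrite AT probability_setT => /eqP; rewrite onee_eq0.
done.
Qed.
End meas.

Theorem proposition4 (R : realType) (dX : measure_display) (Xs : measurableType dX)
  (Xs_infinite : infinite_set [set: Xs])
  (dU : measure_display) (U : measurableType dU) (Q : probability U R)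
  (t : forall n : nat, U -> n.-tuple Xs -> bool)
  (t_meas : forall n : nat,
      measurable_fun [set: U * n.-tuple Xs] (fun z => t n z.1 z.2)) :
  exists (d : measure_display) (Omega : measurableType d)
         (P : probability Omega R) (X : nat -> Omega -> Xs),
    (forall i : nat, measurable_fun [set: Omega] (X i)) /\
    ~ consistent_on Q t P X.
Proof.
apply: contrapT => Hn.
pose err n (s : n.-tuple Xs) (b : bool) := Q [set u | t n u s != b].
have Hev : forall x : nat -> Xs, \forall n \near \oo,
   (err n [tuple x i | i < n] `[< finite_set (range x) >] < (1/2)%R%:E)%E.
  move=> x.
  have Hc : consistent_on Q t Q (fun i (_ : U) => x i).
    apply: contrapT => nc; apply: Hn; exists dU, U, Q, (fun i _ => x i); split => //; exact: measurable_cst.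
  have h12 : (0 : R) < 1/2 by lra.
  have := Hc (1/2) h12.
  rewrite /= (asbool_equiv_eq (@fs_const _ _ _ _ _ Q x)).
  set c := `[< _ >].
  have -> : (fun n => (Q \x Q)%E [set z : U * U | (1/2:R) <= `|(t n z.1 (sample (fun i (_:U) => x i) n z.2))%:R - c%:R| ])
     = (fun n => err n [tuple x i | i < n] c).
    by apply/funext => n; exact: (@errE _ _ _ _ _ Q t t_meas n [tuple x i | i < n] c).
  move=> /(@fine_cvgP _ _ _ _ _ 0) [hfin hf].
  move: (hf) => /cvgr_lt /(_ _ h12).
  move=> [N2 _ H2]; have [N1 _ H1] := hfin.
  exists (maxn N1 N2) => // n /= hn.
  have f1 : err n [tuple x i | i < n] c \is a fin_num.
    by apply: H1; rewrite /= (leq_trans _ hn) ?leq_maxl.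
  have f2 : fine (err n [tuple x i | i < n] c) < 1/2.
    by apply: H2; rewrite /= (leq_trans _ hn) ?leq_maxr.
  by rewrite -(fineK f1) lte_fin.
have [a ainj] : exists a : nat -> Xs, injective a.
  have /infiniteP/pcard_injP[a ainj] := Xs_infinite.
  by exists a => i j; apply: ainj; rewrite inE.
pose P (x : nat -> Xs) (m n : nat) := (m < n)%N /\ (err n [tuple x i | i < n] true < (1/2)%R%:E)%E.
pose ch (x : nat -> Xs) (m : nat) := xget m.+1 (P x m).
have hch : forall x m, (m < ch x m)%N.
  move=> x m; rewrite /ch; case: xgetP => [n _ [] //|_]; exact: ltnSn.
have good : forall x m, finite_set (range x) -> P x m (ch x m).
  move=> x m fx; rewrite /ch; case: xgetP => [n _ //|nP]; exfalso.
  have := Hev x; rewrite asboolT // => -[N _ HN].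
  apply: (nP (maxn N m.+1)); split; first by rewrite leq_max ltnSn orbT.
  by apply: HN; rewrite /= leq_maxl.
have := Hev (ylim a ch); rewrite asboolF; last exact: (@ylim_inf _ a ch hch ainj).
move=> -[N _ HN].
pose n := (seqs a ch N.+1).2.
have hn : (N <= n)%N by apply: leq_trans (leqnSn N) (seqs_ge a ch hch N.+1).
have h1 := HN n hn.
have h2 : (err n [tuple ylim a ch i | i < n] true < (1/2)%R%:E)%E.
  rewrite (@ylim_tuple _ a ch hch N.+1 n (leqnn n)) (seqs_tuple a ch N).
  exact: (good _ _ (seqs_finite a ch N)).2.
have := lteD h2 h1.
rewrite (@errC _ _ _ _ _ Q t t_meas) -EFinD.
have -> : (1/2 + 1/2 : R) = 1 by lra.
by rewrite ltxx.
Qed.
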